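(* Let $q\equiv 3\pmod 4$ be a prime power, let $P=\{(x,y,z)\in\mathbb{F}_q^3 : z=x^2+y^2\}$, and let $a,b,c,d\in P$. Then $a+b=c+d$ if and only if $\underline{a},\underline{c},\underline{b},\underline{d}$ (in this cyclic order) form a rectangle in $\mathbb{F}_q^2$.
   Context: Every point of $P$ is written as $x=(\underline{x},\underline{x}\cdot\underline{x})$ with $\underline{x}\in\mathbb{F}_q^2$, where $u\cdot v=u_1v_1+u_2v_2$. Four points $x,z,y,t\in\mathbb{F}_q^2$ form a rectangle with vertices in the cyclic order $x,z,y,t$ if $(x-z)\cdot(y-z)=0$, $(z-y)\cdot(t-y)=0$, $(y-t)\cdot(x-t)=0$ and $(t-x)\cdot(z-x)=0$ (right angles at every vertex). *)

(* Defs.v *)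
From HB Require Import structures.
From mathcomp Require Import all_boot all_order all_algebra all_field.
Set Implicit Arguments. Unset Strict Implicit. Unset Printing Implicit Defensive.
Import GRing.Theory.
Local Open Scope ring_scope.

Definition dot2 (F : fieldType) (u v : 'rV[F]_2) : F :=
  u 0 0 * v 0 0 + u 0 1 * v 0 1.

Definition inP (F : fieldType) (a : 'rV[F]_3) : Prop :=
  a 0 2%:R = a 0 0 ^+ 2 + a 0 1 ^+ 2.

Definition under (F : fieldType) (a : 'rV[F]_3) : 'rV[F]_2 :=
  \row_(i < 2) a 0 (widen_ord (isT : (2 <= 3)%N) i).

Definition rectangle (F : fieldType) (x z y t : 'rV[F]_2) : Prop :=
  [/\ dot2 (x - z) (y - z) = 0, dot2 (z - y) (t - y) = 0,
      dot2 (y - t) (x - t) = 0 & dot2 (t - x) (z - x) = 0].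

(* Main.v *)
Require Import Defs.
From HB Require Import structures.
From mathcomp Require Import all_boot all_order all_algebra all_field.
From mathcomp Require Import ring zify.
Local Open Scope ring_scope.
Import GRing.Theory.

Lemma two_neq0 {F : finFieldType} (hq : (#|F| %% 4 = 3)%N) : (2%:R : F) != 0.
Proof.
apply/negP => /eqP h2.
have pc : (2%N \in [pchar F]) by rewrite inE /= h2 eqxx.
move: hq; rewrite (card_pprimeChar pc); case: (logn _ _) => [|n] //.
rewrite expnS; lia.
Qed.

Lemma aniso {F : finFieldType} (hq : (#|F| %% 4 = 3)%N) (x y : F) :
  x ^+ 2 + y ^+ 2 = 0 -> y = 0.
Proof.
move=> h; apply/eqP; apply/negPn/negP => hy.
pose t := x / y.
have t2 : t ^+ 2 = -1.
  rewrite /t expr_div_n; apply: (mulIf (expf_neq0 2 hy)).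
  rewrite mulfVK ?expf_neq0 //; apply/eqP; rewrite -subr_eq0; apply/eqP; rewrite -h; ring.
have Eq : #|F| = (4 * (#|F| %/ 4) + 3)%N by rewrite {1}(divn_eq #|F| 4) hq mulnC.
have := expf_card t; rewrite Eq exprD exprM.
have -> : t ^+ 4 = 1 by rewrite (_ : 4 = 2 * 2)%N // exprM t2 sqrrN expr1n.
rewrite expr1n mul1r exprS t2 mulrN1 => /eqP.
rewrite eq_sym -subr_eq0 opprK -mulr2n -mulr_natr mulf_eq0 (negbTE (two_neq0 hq)) orbF => /eqP t0.
by move: t2; rewrite t0 expr0n /= => /eqP; rewrite eq_sym oppr_eq0 oner_eq0.
Qed.

Lemma zero_of {F : finFieldType} (hq : (#|F| %% 4 = 3)%N) (k L R X : F) :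
  L = R -> 2%:R * X = k * (L - R) -> X = 0.
Proof.
move=> E H; apply: (mulfI (two_neq0 hq)); rewrite mulr0 H E subrr mulr0 //.
Qed.

Lemma sum4 {F : finFieldType} (A B C D X : F) :
  A = 0 -> B = 0 -> C = 0 -> D = 0 -> X = A + B + C + D -> X = 0.
Proof. by move=> -> -> -> -> ->; rewrite !addr0. Qed.

Lemma lin0 {F : finFieldType} (X Y k : F) : Y = 0 -> X = k * Y -> X = 0.
Proof. by move=> -> ->; rewrite mulr0. Qed.

Lemma W0 : widen_ord (isT : (2 <= 3)%N) (0 : 'I_2) = 0.
Proof. by apply/val_inj. Qed.
Lemma W1 : widen_ord (isT : (2 <= 3)%N) (1 : 'I_2) = 1.
Proof. by apply/val_inj. Qed.

Theorem lemma2p1 (F : finFieldType) (hq : (#|F| %% 4 = 3)%N)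
    (a b c d : 'rV[F]_3) (ha : inP a) (hb : inP b) (hc : inP c) (hd : inP d) :
  a + b = c + d <-> rectangle (under a) (under c) (under b) (under d).
Proof.
rewrite /rectangle /dot2 !mxE !W0 !W1.
move: ha hb hc hd; rewrite /inP => ha hb hc hd.
split.
  move=> E.
  have e j : a 0 j + b 0 j = c 0 j + d 0 j.
    by have := congr1 (fun m : 'rV[F]_3 => m 0 j) E; rewrite !mxE.
  have d0 : d 0 0 = a 0 0 + b 0 0 - c 0 0 by rewrite (e 0); ring.
  have d1 : d 0 1 = a 0 1 + b 0 1 - c 0 1 by rewrite (e 1); ring.
  have E2 := e 2%:R.
  rewrite ha hb hc hd d0 d1 in E2.
  rewrite d0 d1.
  split.
  - eapply (@zero_of _ hq (-1) _ _ _ E2). ring.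
  - eapply (@zero_of _ hq 1 _ _ _ E2). ring.
  - eapply (@zero_of _ hq (-1) _ _ _ E2). ring.
  - eapply (@zero_of _ hq 1 _ _ _ E2). ring.
case=> H1 H2 H3 H4.
set w0 := a 0 0 + b 0 0 - c 0 0 - d 0 0.
set w1 := a 0 1 + b 0 1 - c 0 1 - d 0 1.
have S : w0 ^+ 2 + w1 ^+ 2 = 0.
  eapply (@sum4 _ _ _ _ _ _ H1 H2 H3 H4); rewrite /w0 /w1; ring.
have S' : w1 ^+ 2 + w0 ^+ 2 = 0 by rewrite addrC.
have w1z := @aniso _ hq _ _ S.
have w0z := @aniso _ hq _ _ S'.
have d0 : d 0 0 = a 0 0 + b 0 0 - c 0 0.
  by move: w0z; rewrite /w0 => /eqP; rewrite subr_eq0 => /eqP <-.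
have d1 : d 0 1 = a 0 1 + b 0 1 - c 0 1.
  by move: w1z; rewrite /w1 => /eqP; rewrite subr_eq0 => /eqP <-.
have e2 : a 0 2%:R + b 0 2%:R = c 0 2%:R + d 0 2%:R.
  apply/eqP; rewrite -subr_eq0; apply/eqP.
  rewrite ha hb hc hd d0 d1.
  eapply (@lin0 _ _ _ (-2%:R) H1); ring.
apply/rowP => j; rewrite !mxE.
case: j => [[|[|[|//]]] Hj].
- have -> : Ordinal Hj = 0 by apply/val_inj.
  by rewrite d0; ring.
- have -> : Ordinal Hj = 1 by apply/val_inj.
  by rewrite d1; ring.
- have -> : Ordinal Hj = 2%:R by apply/val_inj.
  exact: e2.
Qed.
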